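(* Let $X$ be a space and fix $x_0\in X$. Then $X$ is wep-connected if and only if for each $x\in X$ there is a path $p:I\to X$ from $x_0$ to $x$ such that for every open neighborhood $\mathcal U$ of $p$ in $P(X,x_0)$ there is an open neighborhood $V$ of $x$ in $X$ such that for every $v\in V$ there is a path $q\in\mathcal U$ from $x_0$ to $v$.
   Context: $P(X)$ is the space of paths $I=[0,1]\to X$ with the compact-open topology and $P(X,x_0)=\{\alpha\in P(X):\alpha(0)=x_0\}$ with the subspace topology. A path $p:I\to X$ is well-ended if for every open neighborhood $\mathcal U$ of $p$ in $P(X)$ there are open neighborhoods $V_0,V_1$ of $p(0),p(1)$ in $X$ such that for all $a\in V_0,b\in V_1$ there is $q\in\mathcal U$ with $q(0)=a$, $q(1)=b$. $X$ is wep-connected if any two points of $X$ are joined by a well-ended path in $X$. *)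

(* Defs.v *)
From Stdlib Require Import Reals List.
Open Scope R_scope.

Record TopSpace := {
  carrier :> Type;
  is_open : (carrier -> Prop) -> Prop;
  open_full : is_open (fun _ => True);
  open_inter : forall U V, is_open U -> is_open V -> is_open (fun x => U x /\ V x);
  open_union : forall (J : Type) (F : J -> carrier -> Prop),
      (forall j, is_open (F j)) -> is_open (fun x => exists j, F j x)
}.

Definition I : Type := { t : R | 0 <= t <= 1 }.
Lemma I0_prf : 0 <= 0 <= 1. Proof. split; [apply Rle_refl | apply Rle_0_1]. Qed.
Lemma I1_prf : 0 <= 1 <= 1. Proof. split; [apply Rle_0_1 | apply Rle_refl]. Qed.
Definition i0 : I := exist _ 0 I0_prf.
Definition i1 : I := exist _ 1 I1_prf.

Definition is_path {X : TopSpace} (f : I -> X) : Prop :=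
  forall U : X -> Prop, is_open X U ->
    exists O : R -> Prop, Rtopology.open_set O /\
      forall t : I, U (f t) <-> O (proj1_sig t).

(* Subbasic set V(K,U) = {f | f(K) ⊆ U} of the compact-open topology,
   for K compact in I (a compact subset of R contained in [0,1]) and U open. *)
Definition CO_sub {X : TopSpace} (K : R -> Prop) (U : X -> Prop) (f : I -> X) : Prop :=
  forall t : I, K (proj1_sig t) -> U (f t).

Definition CO_subbasic {X : TopSpace} (KU : (R -> Prop) * (X -> Prop)) : Prop :=
  (forall t, fst KU t -> 0 <= t <= 1) /\ Rtopology.compact (fst KU) /\ is_open X (snd KU).

(* Open sets of P(X) (compact-open topology): W is open iff every path in W
   lies in a finite intersection of subbasic sets contained (among paths) in W. *)
Definition CO_open {X : TopSpace} (W : (I -> X) -> Prop) : Prop :=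
  forall f, is_path f -> W f ->
    exists l : list ((R -> Prop) * (X -> Prop)),
      (forall KU, In KU l -> CO_subbasic KU) /\
      (forall KU, In KU l -> CO_sub (fst KU) (snd KU) f) /\
      (forall g, is_path g -> (forall KU, In KU l -> CO_sub (fst KU) (snd KU) g) -> W g).

Definition well_ended {X : TopSpace} (p : I -> X) : Prop :=
  forall W : (I -> X) -> Prop, CO_open W -> W p ->
    exists V0 V1 : X -> Prop,
      is_open X V0 /\ V0 (p i0) /\ is_open X V1 /\ V1 (p i1) /\
      forall a b, V0 a -> V1 b ->
        exists q, is_path q /\ W q /\ q i0 = a /\ q i1 = b.

Definition wep_connected (X : TopSpace) : Prop :=
  forall x y : X, exists p : I -> X,
    is_path p /\ p i0 = x /\ p i1 = y /\ well_ended p.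

(* Main.v *)
Require Import Defs.
From Stdlib Require Import Reals Lra List Classical ProofIrrelevance.
From Stdlib Require Import Rtopology Ranalysis.
Open Scope R_scope.

Lemma I_eq (s s' : I) : proj1_sig s = proj1_sig s' -> s = s'.
Proof. destruct s as [a pa], s' as [b pb]; simpl; intros ->. f_equal; apply proof_irrelevance. Qed.

Definition clampR (t : R) : R := Rmax 0 (Rmin t 1).
Lemma clampR_prf t : 0 <= clampR t <= 1.
Proof. unfold clampR, Rmax, Rmin; repeat destruct Rle_dec; lra. Qed.
Definition clamp (t : R) : I := exist _ (clampR t) (clampR_prf t).
Lemma clamp_val t : 0 <= t <= 1 -> proj1_sig (clamp t) = t.
Proof. intros H; simpl; unfold clampR, Rmax, Rmin; repeat destruct Rle_dec; lra. Qed.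

Definition concat {X : TopSpace} (q1 q2 : I -> X) : I -> X := fun t =>
  if Rle_dec (proj1_sig t) (1/2) then q1 (clamp (1 - 2 * proj1_sig t))
  else q2 (clamp (2 * proj1_sig t - 1)).

Lemma open_or A B : open_set A -> open_set B -> open_set (fun t => A t \/ B t).
Proof. exact (open_set_P2 A B). Qed.
Lemma open_and A B : open_set A -> open_set B -> open_set (fun t => A t /\ B t).
Proof. exact (open_set_P3 A B). Qed.
Lemma open_lt c : open_set (fun t => t < c).
Proof.
  intros x Hx. assert (Hd : 0 < c - x) by lra. exists (mkposreal _ Hd).
  intros y Hy; unfold disc in Hy; simpl in Hy. apply Rabs_def2 in Hy. lra.
Qed.
Lemma open_gt c : open_set (fun t => c < t).
Proof.
  intros x Hx. assert (Hd : 0 < x - c) by lra. exists (mkposreal _ Hd).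
  intros y Hy; unfold disc in Hy; simpl in Hy. apply Rabs_def2 in Hy. lra.
Qed.
Lemma open_aff a b O : open_set O -> open_set (fun t => O (a * t + b)).
Proof.
  intros HO. apply (continuity_P2 (fun t => a * t + b) O); auto.
  intro x; reg.
Qed.

Lemma concat_path {X : TopSpace} (q1 q2 : I -> X) :
  is_path q1 -> is_path q2 -> q1 i0 = q2 i0 -> is_path (concat q1 q2).
Proof.
  intros H1 H2 E U HU.
  destruct (H1 U HU) as [O1 [HO1 E1]]. destruct (H2 U HU) as [O2 [HO2 E2]].
  exists (fun t => (t < 1/2 /\ O1 ((-2) * t + 1)) \/ (1/2 < t /\ O2 (2 * t + (-1)))
     \/ (O1 ((-2) * t + 1) /\ O2 (2 * t + (-1)))).
  split.
  - repeat apply open_or; repeat apply open_and; auto using open_lt, open_gt, open_aff.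
  - intros t. unfold concat. destruct t as [t pt]; simpl proj1_sig.
    destruct (Rle_dec t (1/2)) as [h|h].
    + rewrite E1, clamp_val by lra.
      replace (1 - 2 * t) with ((-2) * t + 1) by ring.
      destruct (Rle_lt_or_eq_dec _ _ h) as [h'|h'].
      * split; [intros; left; split; auto| intros [[_ ?]|[[? _]|[? _]]]; auto; lra].
      * subst t. replace ((-2) * (1/2) + 1) with 0 by field.
        replace (2 * (1/2) + -1) with 0 by field.
        assert (A1 := E1 i0). assert (A2 := E2 i0). rewrite E in A1. simpl in A1, A2.
        split.
        -- intros H. right; right; tauto.
        -- intros [[? _]|[[? _]|[? _]]]; auto; lra.
    + rewrite E2, clamp_val by lra.
      replace (2 * t - 1) with (2 * t + (-1)) by ring.
      split; [intros; right; left; split; auto; lra| intros [[? _]|[[_ ?]|[_ ?]]]; auto; lra].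
Qed.

Lemma concat_i0 {X : TopSpace} (q1 q2 : I -> X) : concat q1 q2 i0 = q1 i1.
Proof.
  unfold concat; simpl. destruct Rle_dec; [|lra]. f_equal; apply I_eq.
  rewrite clamp_val; simpl; lra.
Qed.
Lemma concat_i1 {X : TopSpace} (q1 q2 : I -> X) : concat q1 q2 i1 = q2 i1.
Proof.
  unfold concat; simpl. destruct Rle_dec; [lra|]. f_equal; apply I_eq.
  rewrite clamp_val; simpl; lra.
Qed.

Definition K1 (K : R -> Prop) := image_dir (fun t => 1 - 2 * t) (fun t => K t /\ t <= 1/2).
Definition K2 (K : R -> Prop) := image_dir (fun t => 2 * t - 1) (fun t => K t /\ 1/2 <= t).

Lemma compact_cut K (P : R -> Prop) : compact K -> closed_set P ->
  compact (fun t => K t /\ P t).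
Proof.
  intros HK HP. apply (compact_P4 K); [auto| |intros x []; auto].
  intros x Hx. unfold complementary in Hx.
  destruct (classic (K x)) as [Kx|Kx].
  - assert (Px : ~ P x) by tauto. destruct (HP x Px) as [d Hd].
    exists d; intros y Hy; unfold complementary; intros [_ ?]; apply (Hd y Hy); auto.
  - destruct (compact_P2 K HK x Kx) as [d Hd].
    exists d; intros y Hy; unfold complementary; intros [? _]; apply (Hd y Hy); auto.
Qed.

Lemma sub_K1 {X : TopSpace} K (U : X -> Prop) : CO_subbasic (K, U) -> CO_subbasic (K1 K, U).
Proof.
  intros [H0 [Hc Ho]]; simpl in *. split; [|split]; simpl; auto.
  - intros s [t [-> [Kt ht]]]. specialize (H0 t Kt). lra.
  - apply continuity_compact; [intro; reg|]. apply compact_cut; auto.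
    intros x Hx; unfold complementary in Hx.
    destruct (open_gt (1/2) x) as [d Hd]; [lra|]. exists d; intros y Hy; unfold complementary; specialize (Hd y Hy); simpl in Hd; lra.
Qed.
Lemma sub_K2 {X : TopSpace} K (U : X -> Prop) : CO_subbasic (K, U) -> CO_subbasic (K2 K, U).
Proof.
  intros [H0 [Hc Ho]]; simpl in *. split; [|split]; simpl; auto.
  - intros s [t [-> [Kt ht]]]. specialize (H0 t Kt). lra.
  - apply continuity_compact; [intro; reg|]. apply compact_cut; auto.
    intros x Hx; unfold complementary in Hx.
    destruct (open_lt (1/2) x) as [d Hd]; [lra|]. exists d; intros y Hy; unfold complementary; specialize (Hd y Hy); simpl in Hd; lra.
Qed.

Lemma to_K1 {X : TopSpace} K (U : X -> Prop) p q : CO_subbasic (K, U) ->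
  CO_sub K U (concat p q) -> CO_sub (K1 K) U p.
Proof.
  intros [H0 _] Hs s [t [Es [Kt ht]]]. simpl in H0. specialize (H0 t Kt).
  assert (A := Hs (clamp t)). rewrite clamp_val in A by lra. specialize (A Kt).
  unfold concat in A. rewrite clamp_val in A by lra.
  destruct Rle_dec; [|lra]. replace s with (clamp (1 - 2 * t)); auto.
  apply I_eq. rewrite clamp_val by lra. auto.
Qed.
Lemma to_K2 {X : TopSpace} K (U : X -> Prop) p q : CO_subbasic (K, U) -> p i0 = q i0 ->
  CO_sub K U (concat p q) -> CO_sub (K2 K) U q.
Proof.
  intros [H0 _] E Hs s [t [Es [Kt ht]]]. simpl in H0. specialize (H0 t Kt).
  assert (A := Hs (clamp t)). rewrite clamp_val in A by lra. specialize (A Kt).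
  unfold concat in A. rewrite clamp_val in A by lra.
  destruct Rle_dec.
  - assert (t = 1/2) by lra. subst t.
    replace s with i0. 2:{ apply I_eq. simpl. lra. }
    rewrite <- E. replace i0 with (clamp (1 - 2 * (1/2))); auto.
    apply I_eq. rewrite clamp_val by lra. simpl; lra.
  - replace s with (clamp (2 * t - 1)); auto.
    apply I_eq. rewrite clamp_val by lra. auto.
Qed.
Lemma from_K {X : TopSpace} K (U : X -> Prop) p q :
  CO_sub (K1 K) U p -> CO_sub (K2 K) U q -> CO_sub K U (concat p q).
Proof.
  intros A B [t pt] Kt. unfold concat; simpl in *.
  destruct Rle_dec.
  - apply A. rewrite clamp_val by lra. exists t; auto.
  - apply B. rewrite clamp_val by lra. exists t; split; auto; split; auto; lra.
Qed.

Theorem lemma4p15 (X : TopSpace) (x0 : X) :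
  wep_connected X <->
  (forall x : X, exists p : I -> X,
     is_path p /\ p i0 = x0 /\ p i1 = x /\
     (* every open nbhd of p in P(X,x0) has the form W ∩ P(X,x0), W open in P(X) *)
     forall W : (I -> X) -> Prop, CO_open W -> W p ->
       exists V : X -> Prop, is_open X V /\ V x /\
         forall v, V v -> exists q : I -> X,
           is_path q /\ W q /\ q i0 = x0 /\ q i1 = v).
Proof.
  split.
  - intros Hw x. destruct (Hw x0 x) as [p [Hp [E0 [E1 Hwe]]]].
    exists p; repeat split; auto. intros W HW Wp.
    destruct (Hwe W HW Wp) as [V0 [V1 [O0 [V0p [O1 [V1p H]]]]]].
    exists V1; repeat split; auto; [rewrite <- E1; auto|].
    intros v Vv. rewrite E0 in V0p. destruct (H x0 v V0p Vv) as [q [? [? [? ?]]]].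
    exists q; auto.
  - intros H x y.
    destruct (H x) as [px [Hpx [Ex0 [Ex1 Hx]]]].
    destruct (H y) as [py [Hpy [Ey0 [Ey1 Hy]]]].
    assert (E : px i0 = py i0) by congruence.
    exists (concat px py). split; [apply concat_path; auto|].
    split; [rewrite concat_i0; auto|]. split; [rewrite concat_i1; auto|].
    intros W HW Wc.
    destruct (HW _ (concat_path _ _ Hpx Hpy E) Wc) as [l [Lsub [Lc LW]]].
    set (Wx := fun g : I -> X => is_path g /\ forall KU, In KU l -> CO_sub (K1 (fst KU)) (snd KU) g).
    set (Wy := fun g : I -> X => is_path g /\ forall KU, In KU l -> CO_sub (K2 (fst KU)) (snd KU) g).
    assert (OWx : CO_open Wx).
    { intros f Hf [_ Wf]. exists (map (fun KU => (K1 (fst KU), snd KU)) l).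
      split; [|split].
      - intros KU' HKU. apply in_map_iff in HKU. destruct HKU as [[K U] [<- HK]].
        apply sub_K1. apply (Lsub _ HK).
      - intros KU' HKU. apply in_map_iff in HKU. destruct HKU as [KU [<- HK]]. exact (Wf KU HK).
      - intros g Hg Hs. split; auto. intros KU HK. apply (Hs (K1 (fst KU), snd KU)).
        apply in_map_iff. exists KU; auto. }
    assert (OWy : CO_open Wy).
    { intros f Hf [_ Wf]. exists (map (fun KU => (K2 (fst KU), snd KU)) l).
      split; [|split].
      - intros KU' HKU. apply in_map_iff in HKU. destruct HKU as [[K U] [<- HK]].
        apply sub_K2. apply (Lsub _ HK).
      - intros KU' HKU. apply in_map_iff in HKU. destruct HKU as [KU [<- HK]]. exact (Wf KU HK).
      - intros g Hg Hs. split; auto. intros KU HK. apply (Hs (K2 (fst KU), snd KU)).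
        apply in_map_iff. exists KU; auto. }
    assert (Wxp : Wx px).
    { split; auto. intros [K U] HK. apply (to_K1 K U px py); [apply (Lsub _ HK)|apply (Lc _ HK)]. }
    assert (Wyp : Wy py).
    { split; auto. intros [K U] HK. apply (to_K2 K U px py); [apply (Lsub _ HK)|auto|apply (Lc _ HK)]. }
    destruct (Hx Wx OWx Wxp) as [V0 [OV0 [V0x HV0]]].
    destruct (Hy Wy OWy Wyp) as [V1 [OV1 [V1y HV1]]].
    exists V0, V1. rewrite concat_i0, concat_i1, Ex1, Ey1.
    repeat split; auto.
    intros a b Va Vb.
    destruct (HV0 a Va) as [q1 [Hq1 [[_ Wq1] [Eq10 Eq11]]]].
    destruct (HV1 b Vb) as [q2 [Hq2 [[_ Wq2] [Eq20 Eq21]]]].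
    exists (concat q1 q2). split; [apply concat_path; auto; congruence|].
    split; [|rewrite concat_i0, concat_i1; auto].
    apply LW; [apply concat_path; auto; congruence|].
    intros [K U] HK. apply from_K; [apply (Wq1 _ HK)|apply (Wq2 _ HK)].
Qed.
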